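(* Let $\mathcal{A}$ be a ring with identity $1$ and let $a,d\in\mathcal{A}$. Suppose $a$ is Mary invertible along $d$, and let $t=(ad)^\sharp a$, where $(ad)^\sharp$ denotes the group inverse of $ad$. Then $dt$ and $1-td$ are idempotents and $a$ is Djordjevic–Wei $(p,q)$-invertible with $p=dt$ and $q=1-td$; i.e. there exists $b\in\mathcal{A}$ with $bab=b$, $ba=dt$ and $1-ab=1-td$.
   Context: For $x,y$ in $\mathcal{A}$, $x\mathcal{A}=y\mathcal{A}$ means $x=yz$ and $y=xz'$ for some $z,z'\in\mathcal{A}$; $\mathcal{A}x=\mathcal{A}y$ is defined analogously with left multiplication. $a$ is Mary invertible along $d$ if there exists $b\in\mathcal{A}$ with $bab=b$, $b\mathcal{A}=d\mathcal{A}$, $\mathcal{A}b=\mathcal{A}d$. The group inverse of $c\in\mathcal{A}$ is the (unique) $c^\sharp$ with $cc^\sharp c=c$, $c^\sharp cc^\sharp=c^\sharp$, $cc^\sharp=c^\sharp c$; it is known (Mary) that if $a$ is Mary invertible along $d$ then $ad$ is group invertible, so $t$ is well defined. Given idempotents $p,q\in\mathcal{A}$, $a$ is Djordjevic–Wei $(p,q)$-invertible if there exists $b\in\mathcal{A}$ with $bab=b$, $ba=p$, $1-ab=q$. *)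

(* Defs.v *)
From mathcomp Require Import all_boot all_algebra.
Set Implicit Arguments. Unset Strict Implicit. Unset Printing Implicit Defensive.
Import GRing.Theory.
Local Open Scope ring_scope.

(* x A = y A : x = y z and y = x z' for some z, z'. *)
Definition right_ideal_eq (R : pzRingType) (x y : R) : Prop :=
  (exists z, x = y * z) /\ (exists z', y = x * z').

(* A x = A y : x = z y and y = z' x for some z, z'. *)
Definition left_ideal_eq (R : pzRingType) (x y : R) : Prop :=
  (exists z, x = z * y) /\ (exists z', y = z' * x).

Definition mary_invertible (R : pzRingType) (a d : R) : Prop :=
  exists b : R, b * a * b = b /\ right_ideal_eq b d /\ left_ideal_eq b d.

Definition is_group_inverse (R : pzRingType) (c g : R) : Prop :=
  c * g * c = c /\ g * c * g = g /\ c * g = g * c.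

Definition idempotent_el (R : pzRingType) (e : R) : Prop := e * e = e.

Definition dw_invertible (R : pzRingType) (a p q : R) : Prop :=
  exists b : R, b * a * b = b /\ b * a = p /\ 1 - a * b = q.

(* Main.v *)
Require Import Defs.
From mathcomp Require Import all_boot all_algebra.
Local Open Scope ring_scope.
Import GRing.Theory.

Theorem corollary2p4 (R : pzRingType) (a d : R) :
  mary_invertible a d ->
  forall g : R, is_group_inverse (a * d) g ->
  let t := g * a in
  idempotent_el (d * t) /\ idempotent_el (1 - t * d) /\
  dw_invertible a (d * t) (1 - t * d).
Proof.
move=> _ g [h1 [h2 h3]] t; rewrite /t /idempotent_el.
have E1 : d * (g * a) * (d * (g * a)) = d * (g * a).
  have -> : d * (g * a) * (d * (g * a)) = d * (g * (a * d) * g) * a by rewrite !mulrA.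
  by rewrite h2 mulrA.
have E2 : g * a * d * (g * a * d) = g * a * d.
  have -> : g * a * d * (g * a * d) = g * (a * d) * g * (a * d) by rewrite !mulrA.
  by rewrite h2 mulrA.
split; first exact: E1.
split.
  by rewrite mulrBl mulrBr !mul1r mulrBr mulr1 E2 subrr subr0.
exists (d * g); split.
  have -> : d * g * a * (d * g) = d * (g * (a * d) * g) by rewrite !mulrA.
  by rewrite h2.
split; first by rewrite mulrA.
by rewrite mulrA h3 mulrA.
Qed.
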